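(* Let $\mathbf L\in\mathbb R_+^{n\times k}$. Then $\mathrm{CCdim}(\mathbf L)\le\operatorname{affdim}(\mathbf L)$.
   Context: Notation: $[m]=\{1,\dots,m\}$; $\Delta_n=\{\mathbf p\in\mathbb R_+^n:\sum_i p_i=1\}$. A loss matrix $\mathbf L\in\mathbb R_+^{n\times k}$ has columns $\boldsymbol\ell_t$, $t\in[k]$. Standing assumption: for each $t\in[k]$ there is $\mathbf p\in\Delta_n$ with $\operatorname{argmin}_{t'}\mathbf p^\top\boldsymbol\ell_{t'}=\{t\}$. $\operatorname{affdim}(\mathbf L)$ is the dimension of the affine hull of $\{\boldsymbol\ell_1,\dots,\boldsymbol\ell_k\}$ (i.e. of the linear subspace parallel to it). A surrogate loss $\boldsymbol\psi:\mathcal C\to\mathbb R_+^n$ ($\mathcal C\subseteq\mathbb R^d$ convex) is $\mathbf L$-calibrated if there is $\mathrm{pred}:\mathcal C\to[k]$ such that for all $\mathbf p\in\Delta_n$: $\inf_{\mathbf u\in\mathcal C:\mathrm{pred}(\mathbf u)\notin\operatorname{argmin}_t\mathbf p^\top\boldsymbol\ell_t}\mathbf p^\top\boldsymbol\psi(\mathbf u)>\inf_{\mathbf u\in\mathcal C}\mathbf p^\top\boldsymbol\psi(\mathbf u)$. $\mathrm{CCdim}(\mathbf L)$ is the smallest $d\in\mathbb Z_+$ for which there exist a convex set $\mathcal C\subseteq\mathbb R^d$ and a convex (componentwise convex) $\mathbf L$-calibrated surrogate $\boldsymbol\psi:\mathcal C\to\mathbb R_+^n$ ($\infty$ if none exists).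 *)

(* Defs.v *)
From Stdlib Require Import Reals.
Open Scope R_scope.

(* Vectors in R^m are represented as functions nat -> R; only coordinates < m matter. *)

Fixpoint sumR (m : nat) (f : nat -> R) : R :=
  match m with
  | O => 0
  | S m' => sumR m' f + f m'
  end.

(* A loss matrix L in R_+^{n x k}: entry (i,t) is L i t; column t is fun i => L i t. *)
Definition loss_matrix (n k : nat) (L : nat -> nat -> R) : Prop :=
  forall i t, (i < n)%nat -> (t < k)%nat -> 0 <= L i t.

Definition simplex (n : nat) (p : nat -> R) : Prop :=
  (forall i, (i < n)%nat -> 0 <= p i) /\ sumR n p = 1.

Definition dot (n : nat) (p l : nat -> R) : R := sumR n (fun i => p i * l i).

Definition in_argmin (n k : nat) (L : nat -> nat -> R) (p : nat -> R) (t : nat) : Prop :=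
  (t < k)%nat /\
  forall t', (t' < k)%nat -> dot n p (fun i => L i t) <= dot n p (fun i => L i t').

Definition standing_assumption (n k : nat) (L : nat -> nat -> R) : Prop :=
  forall t, (t < k)%nat ->
    exists p, simplex n p /\ forall t', in_argmin n k L p t' <-> t' = t.

Definition in_span (n m : nat) (f : nat -> nat -> R) (x : nat -> R) : Prop :=
  exists c : nat -> R, forall i, (i < n)%nat -> x i = sumR m (fun j => c j * f j i).

Definition lin_indep (n m : nat) (f : nat -> nat -> R) : Prop :=
  forall c : nat -> R,
    (forall i, (i < n)%nat -> sumR m (fun j => c j * f j i) = 0) ->
    forall j, (j < m)%nat -> c j = 0.

(* direction vectors l_t - l_0, spanning the subspace parallel to the affine hull *)
Definition diffs (L : nat -> nat -> R) : nat -> nat -> R :=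
  fun t i => L i t - L i 0%nat.

(* affdim(L) = m : the linear subspace parallel to aff{l_1..l_k}
   (= span{l_t - l_0}) has a basis of m vectors. *)
Definition is_affdim (n k : nat) (L : nat -> nat -> R) (m : nat) : Prop :=
  exists b : nat -> nat -> R,
    lin_indep n m b /\
    (forall j, (j < m)%nat -> in_span n k (diffs L) (b j)) /\
    (forall t, (t < k)%nat -> in_span n m b (diffs L t)).

Definition is_inf (E : R -> Prop) (x : R) : Prop :=
  (forall y, E y -> x <= y) /\ (forall z, (forall y, E y -> z <= y) -> z <= x).

(* inf B < inf A in the extended reals, for sets bounded below
   (inf of the empty set is +infinity). *)
Definition inf_lt (B A : R -> Prop) : Prop :=
  exists b, is_inf B b /\
    ((forall y, ~ A y) \/ exists a, is_inf A a /\ b < a).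

Definition convex_set_in (d : nat) (C : (nat -> R) -> Prop) : Prop :=
  (forall u, C u -> forall j, (d <= j)%nat -> u j = 0) /\
  (forall u v lam, C u -> C v -> 0 <= lam <= 1 ->
     C (fun j => lam * u j + (1 - lam) * v j)).

Definition convex_surrogate (n d : nat) (C : (nat -> R) -> Prop)
    (psi : (nat -> R) -> nat -> R) : Prop :=
  (forall u i, C u -> (i < n)%nat -> 0 <= psi u i) /\
  (forall u v lam i, C u -> C v -> 0 <= lam <= 1 -> (i < n)%nat ->
     psi (fun j => lam * u j + (1 - lam) * v j) i
       <= lam * psi u i + (1 - lam) * psi v i).

Definition calibrated (n k : nat) (L : nat -> nat -> R) (C : (nat -> R) -> Prop)
    (psi : (nat -> R) -> nat -> R) (pred : (nat -> R) -> nat) : Prop :=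
  (forall u, C u -> (pred u < k)%nat) /\
  forall p, simplex n p ->
    inf_lt (fun y => exists u, C u /\ y = dot n p (psi u))
           (fun y => exists u, C u /\ ~ in_argmin n k L p (pred u) /\ y = dot n p (psi u)).

Definition has_cc_surrogate (n k : nat) (L : nat -> nat -> R) (d : nat) : Prop :=
  exists C psi pred,
    convex_set_in d C /\ convex_surrogate n d C psi /\ calibrated n k L C psi pred.

Definition CCdim_le (n k : nat) (L : nat -> nat -> R) (m : nat) : Prop :=
  exists d, (d <= m)%nat /\ has_cc_surrogate n k L d.

(* Main.v *)
Require Import Defs.
From Stdlib Require Import Reals Lra Lia Arith ClassicalEpsilon Classical.
Open Scope R_scope.

Lemma sumR_ext m f g : (forall i, (i < m)%nat -> f i = g i) -> sumR m f = sumR m g.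
Proof. induction m; simpl; intros H; auto. rewrite IHm, (H m); auto. Qed.

Lemma sumR_plus m f g : sumR m (fun i => f i + g i) = sumR m f + sumR m g.
Proof. induction m; simpl; [lra|]. rewrite IHm; ring. Qed.

Lemma sumR_scal m c f : sumR m (fun i => c * f i) = c * sumR m f.
Proof. induction m; simpl; [ring|]. rewrite IHm; ring. Qed.

Lemma sumR_lin2 m x y f g : sumR m (fun i => x * f i + y * g i) = x * sumR m f + y * sumR m g.
Proof. induction m; simpl; [ring|]. rewrite IHm; ring. Qed.

Lemma sumR_lin3 m x y z f g h : sumR m (fun i => x * f i + y * g i + z * h i)
  = x * sumR m f + y * sumR m g + z * sumR m h.
Proof. induction m; simpl; [ring|]. rewrite IHm; ring. Qed.

Lemma sumR_lin4 m x y z w f g h e : sumR m (fun i => x * f i + y * g i + z * h i + w * e i)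
  = x * sumR m f + y * sumR m g + z * sumR m h + w * sumR m e.
Proof. induction m; simpl; [ring|]. rewrite IHm; ring. Qed.

Lemma sumR_swap n m (f : nat -> nat -> R) :
  sumR n (fun i => sumR m (fun j => f i j)) = sumR m (fun j => sumR n (fun i => f i j)).
Proof. induction n; simpl.
- induction m; simpl; [auto|]. rewrite <- IHm; ring.
- rewrite IHn, <- sumR_plus. reflexivity. Qed.

Lemma sumR_le m f g : (forall i, (i < m)%nat -> f i <= g i) -> sumR m f <= sumR m g.
Proof. induction m; simpl; intros H; [lra|]. assert (H1 := H m (Nat.lt_succ_diag_r m)).
  assert (sumR m f <= sumR m g) by auto. lra. Qed.

Lemma sumR_nonneg m f : (forall i, (i < m)%nat -> 0 <= f i) -> 0 <= sumR m f.
Proof. intros H. replace 0 with (sumR m (fun _ => 0)).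
  apply sumR_le; auto. induction m; simpl; auto. rewrite IHm; auto; lra. Qed.

Fixpoint best (s : nat -> R) (k : nat) : nat :=
  match k with
  | O => O
  | S k' => let b := best s k' in if Rlt_dec (s k') (s b) then k' else b
  end.

Lemma best_spec s k : (0 < k)%nat ->
  (best s k < k)%nat /\ forall t, (t < k)%nat -> s (best s k) <= s t.
Proof.
  induction k; intros Hk; [lia|].
  destruct k as [|k'].
  - simpl. destruct (Rlt_dec (s 0%nat) (s 0%nat)); split; try lia;
    intros t Ht; replace t with 0%nat by lia; lra.
  - destruct IHk as [IH1 IH2]; [lia|].
    change (best s (S (S k'))) with
      (if Rlt_dec (s (S k')) (s (best s (S k'))) then S k' else best s (S k')).
    destruct (Rlt_dec (s (S k')) (s (best s (S k')))) as [Hl|Hl]; split; try lia.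
    + intros t Ht. destruct (Nat.eq_dec t (S k')). subst; lra.
      assert (s (best s (S k')) <= s t) by (apply IH2; lia). lra.
    + intros t Ht. destruct (Nat.eq_dec t (S k')). subst; lra.
      apply IH2; lia.
Qed.

Fixpoint gmin (f : nat -> R) (k : nat) : R :=
  match k with
  | O => 1
  | S k' => if Rlt_dec 0 (f k') then Rmin (f k') (gmin f k') else gmin f k'
  end.

Lemma gmin_spec f k : 0 < gmin f k /\ forall t, (t < k)%nat -> 0 < f t -> gmin f k <= f t.
Proof.
  induction k; simpl. split; [lra | intros; lia].
  destruct IHk as [H1 H2].
  destruct (Rlt_dec 0 (f k)); split.
  - apply Rmin_case; lra.
  - intros t Ht Hf. destruct (Nat.eq_dec t k). subst; apply Rmin_l.
    eapply Rle_trans; [apply Rmin_r|]. apply H2; auto; lia.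
  - auto.
  - intros t Ht Hf. destruct (Nat.eq_dec t k). subst; lra. apply H2; auto; lia.
Qed.

Lemma inf_exists (A : R -> Prop) (l : R) : (forall y, A y -> l <= y) ->
  (forall y, ~ A y) \/ exists a, is_inf A a /\ l <= a.
Proof.
  intros Hl. destruct (classic (exists y, A y)) as [[y0 Hy0]|Hn].
  2:{ left. intros y Hy. apply Hn. eauto. }
  right. set (E := fun x => A (- x)).
  assert (HB : bound E). { exists (- l). intros x Hx. unfold E in Hx. apply Hl in Hx. lra. }
  assert (HE : exists x, E x). { exists (- y0). unfold E. rewrite Ropp_involutive. auto. }
  destruct (completeness E HB HE) as [s [Hs1 Hs2]].
  assert (Hinf : is_inf A (- s)).
  { split.
    - intros y Hy. assert (E (- y)) by (unfold E; rewrite Ropp_involutive; auto).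
      apply Hs1 in H. lra.
    - intros z Hz. assert (s <= - z). { apply Hs2. intros x Hx. apply Hz in Hx. lra. } lra. }
  exists (- s). split; auto. apply (proj2 Hinf). auto.
Qed.

Theorem mainTheorem8 (n k : nat) (L : nat -> nat -> R) (m : nat) :
  (0 < k)%nat ->
  loss_matrix n k L ->
  standing_assumption n k L ->
  is_affdim n k L m ->
  CCdim_le n k L m.
Proof.
  intros Hk _ _ [b [_ [_ Hsp]]].
  assert (H : forall t, exists c : nat -> R, (t < k)%nat ->
     forall i, (i < n)%nat -> L i t - L i 0%nat = sumR m (fun j => c j * b j i)).
  { intros t. destruct (lt_dec t k) as [Ht|Ht].
    - destruct (Hsp t Ht) as [c Hc]. exists c. intros _ i Hi. apply (Hc i Hi).
    - exists (fun _ => 0). intros; lia. }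
  set (a := fun t => proj1_sig (constructive_indefinite_description _ (H t))).
  assert (Ha : forall t, (t < k)%nat -> forall i, (i < n)%nat ->
     L i t = L i 0%nat + sumR m (fun j => a t j * b j i)).
  { intros t Ht i Hi. unfold a. destruct (constructive_indefinite_description _ (H t)) as [c Hc].
    simpl. rewrite <- Hc; auto; ring. }
  clearbody a. clear H Hsp.
  set (C := fun u : nat -> R => forall j, (m <= j)%nat -> u j = 0).
  set (psi := fun (u : nat -> R) (i : nat) => sumR m (fun j => (u j - b j i) ^ 2)).
  set (score := fun (u : nat -> R) t => sumR m (fun j => a t j * u j)).
  set (pred := fun u => best (score u) k).
  exists m. split; [lia|]. exists C, psi, pred. split; [|split].
  - split. { intros u Hu j Hj; apply Hu; auto. }
    intros u v lam Hu Hv Hl j Hj. rewrite (Hu j Hj), (Hv j Hj). ring.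
  - split.
    + intros u i _ _. apply sumR_nonneg. intros; apply pow2_ge_0.
    + intros u v lam i _ _ Hl _. unfold psi.
      rewrite <- sumR_lin2. apply sumR_le. intros j _.
      set (x := u j - b j i). set (y := v j - b j i).
      replace (lam * u j + (1 - lam) * v j - b j i) with (lam * x + (1 - lam) * y)
        by (unfold x, y; ring).
      assert (0 <= lam * (1 - lam) * (x - y) ^ 2).
      { apply Rmult_le_pos; [apply Rmult_le_pos|apply pow2_ge_0]; lra. }
      assert (lam * x ^ 2 + (1 - lam) * y ^ 2 - (lam * x + (1 - lam) * y) ^ 2
              = lam * (1 - lam) * (x - y) ^ 2) by ring. lra.
  - split. { intros u _. apply (best_spec (score u) k Hk). }
    intros p [Hp0 Hp1].
    set (us := fun j => if lt_dec j m then sumR n (fun i => p i * b j i) else 0).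
    set (M := dot n p (psi us)).
    assert (Hid : forall u, dot n p (psi u) = M + sumR m (fun j => (u j - us j) ^ 2)).
    { intros u. unfold M, dot, psi.
      rewrite (sumR_ext n (fun i => p i * sumR m (fun j => (u j - b j i) ^ 2))
                 (fun i => sumR m (fun j => p i * (u j - b j i) ^ 2)))
        by (intros; rewrite <- sumR_scal; reflexivity).
      rewrite (sumR_ext n (fun i => p i * sumR m (fun j => (us j - b j i) ^ 2))
                 (fun i => sumR m (fun j => p i * (us j - b j i) ^ 2)))
        by (intros; rewrite <- sumR_scal; reflexivity).
      rewrite (sumR_swap n m (fun i j => p i * (u j - b j i) ^ 2)).
      rewrite (sumR_swap n m (fun i j => p i * (us j - b j i) ^ 2)), <- sumR_plus. apply sumR_ext. intros j Hj.
      assert (Hus : us j = sumR n (fun i => p i * b j i)).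
      { unfold us. destruct (lt_dec j m); [auto|lia]. }
      assert (E : sumR n (fun i => p i * (u j - b j i) ^ 2) =
        sumR n (fun i => p i * (us j - b j i) ^ 2)
        + (u j - us j) * (u j + us j) * sumR n p
        - 2 * (u j - us j) * sumR n (fun i => p i * b j i)).
      { replace (sumR n (fun i => p i * (us j - b j i) ^ 2)
          + (u j - us j) * (u j + us j) * sumR n p
          - 2 * (u j - us j) * sumR n (fun i => p i * b j i)) with
          (1 * sumR n (fun i => p i * (us j - b j i) ^ 2)
          + ((u j - us j) * (u j + us j)) * sumR n p
          + (- 2 * (u j - us j)) * sumR n (fun i => p i * b j i)) by ring.
        rewrite <- sumR_lin3. apply sumR_ext. intros; ring. }
      rewrite E, Hp1, <- Hus. ring. }
    assert (HM : forall u, M <= dot n p (psi u)).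
    { intros u. rewrite Hid. assert (0 <= sumR m (fun j => (u j - us j) ^ 2)).
      { apply sumR_nonneg; intros; apply pow2_ge_0. } lra. }
    assert (HCus : C us). { intros j Hj. unfold us. destruct (lt_dec j m); [lia|auto]. }
    assert (Hdot : forall t, (t < k)%nat ->
      dot n p (fun i => L i t) = dot n p (fun i => L i 0%nat) + score us t).
    { intros t Ht. unfold dot, score.
      rewrite (sumR_ext n _ (fun i => p i * L i 0%nat + sumR m (fun j => a t j * (p i * b j i))))
        by (intros i Hi; rewrite (Ha t Ht i Hi), Rmult_plus_distr_l, <- sumR_scal;
            f_equal; apply sumR_ext; intros; ring).
      rewrite sumR_plus, (sumR_swap n m (fun i j => a t j * (p i * b j i))). f_equal. apply sumR_ext. intros j Hj.
      rewrite sumR_scal. unfold us. destruct (lt_dec j m); [auto|lia]. }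
    set (dl := fun t => dot n p (fun i => L i t)).
    set (ts := best dl k).
    destruct (best_spec dl k Hk) as [Hts1 Hts2]. fold ts in Hts1, Hts2.
    set (N := fun t => sumR m (fun j => (a t j - a ts j) ^ 2)).
    set (f := fun t => (Rmax 0 (dl t - dl ts)) ^ 2 / (1 + N t)).
    destruct (gmin_spec f k) as [Hd0 Hd].
    exists M. split.
    { split. intros y [u [_ ->]]. apply HM.
      intros z Hz. apply Hz. exists us. split; auto. }
    assert (Hlow : forall y, (exists u, C u /\ ~ in_argmin n k L p (pred u) /\ y = dot n p (psi u))
               -> M + gmin f k <= y).
    2:{ destruct (inf_exists _ _ Hlow) as [Hn|[a0 [Ha1 Ha2]]].
        left. auto. right. exists a0. split; auto. lra. }
    intros y [u [_ [Hna ->]]].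
    destruct (best_spec (score u) k Hk) as [Hp1' Hp2']. fold (pred u) in Hp1', Hp2'.
    set (t' := pred u) in *.
    set (g := dl t' - dl ts).
    assert (Hg : 0 < g).
    { destruct (Rlt_dec 0 g) as [|Hng]; auto. exfalso. apply Hna. split; auto.
      intros t'' Ht''. assert (dl ts <= dl t'') by auto. fold (dl t'). fold (dl t''). unfold g in Hng. lra. }
    assert (HN : 0 <= N t') by (apply sumR_nonneg; intros; apply pow2_ge_0).
    assert (Hf : f t' = g ^ 2 / (1 + N t')).
    { unfold f. fold g. rewrite Rmax_right; lra. }
    assert (Hfp : 0 < f t').
    { rewrite Hf. apply Rdiv_lt_0_compat; [|lra]. apply pow_lt; lra. }
    assert (Hdf := Hd t' Hp1' Hfp).
    set (W := sumR m (fun j => (u j - us j) ^ 2)).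
    set (S := sumR m (fun j => (a t' j - a ts j) * (u j - us j))).
    assert (HS : S <= - g).
    { assert (score u t' <= score u ts) by auto.
      assert (E1 : S = (score u t' - score u ts) - (score us t' - score us ts)).
      { replace ((score u t' - score u ts) - (score us t' - score us ts)) with
          (1 * score u t' + (-1) * score u ts + (-1) * score us t' + 1 * score us ts) by ring.
        unfold S, score. rewrite <- sumR_lin4. apply sumR_ext; intros; ring. }
      assert (E2 : g = score us t' - score us ts).
      { unfold g, dl. rewrite (Hdot t' Hp1'), (Hdot ts Hts1). ring. }
      lra. }
    set (D := 1 + N t'). set (lam := g / D).
    assert (HD : 0 < D) by (unfold D; lra).
    assert (Hsq : 0 <= W + 2 * lam * S + lam ^ 2 * N t').
    { replace (W + 2 * lam * S + lam ^ 2 * N t') with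
        (sumR m (fun j => ((u j - us j) + lam * (a t' j - a ts j)) ^ 2)).
      apply sumR_nonneg; intros; apply pow2_ge_0.
      replace (W + 2 * lam * S + lam ^ 2 * N t') with (1 * W + (2 * lam) * S + (lam ^ 2) * N t') by ring.
      unfold W, S, N. rewrite <- sumR_lin3. apply sumR_ext; intros; ring. }
    assert (Hlam : 0 < lam) by (unfold lam; apply Rdiv_lt_0_compat; lra).
    assert (HW : 2 * lam * g - lam ^ 2 * N t' <= W).
    { assert (lam * S <= lam * (- g)) by (apply Rmult_le_compat_l; lra). lra. }
    assert (Ee : 2 * lam * g - lam ^ 2 * N t' = g ^ 2 / D + (g / D) ^ 2).
    { unfold lam. replace (N t') with (D - 1) by (unfold D; ring). field. lra. }
    assert (0 <= (g / D) ^ 2) by apply pow2_ge_0.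
    rewrite Hid. fold W. rewrite Hf in Hdf. fold D in Hdf. lra.
Qed.
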